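(* Let $M=(S,\mathrm{Act},P)$ be an MDP, $T\subseteq S$, $\mathrm{opt}\in\{\min,\max\}$, and let $r$ be the least fixed point of the complementary distance operator $\tilde D^{\mathrm{opt}}$ (w.r.t. the pointwise order on $\mathbb{N}_\infty^S$). Then for all $s\in S$: $r(s)=\infty$ if and only if $\Pr^{\mathrm{opt}}_s(\Diamond T)=1$.
   Context: An MDP is a tuple $M=(S,\mathrm{Act},P)$ with $S$ finite, $\mathrm{Act}$ finite, $P\colon S\times\mathrm{Act}\times S\to[0,1]$ with $\sum_{s'}P(s,a,s')\in\{0,1\}$; $\mathrm{Act}(s)=\{a\mid\sum_{s'}P(s,a,s')=1\}$ is nonempty for all $s$; $\mathrm{Post}(s,a)=\{s'\mid P(s,a,s')>0\}$. A strategy is $\sigma\colon S\to\mathrm{Act}$ with $\sigma(s)\in\mathrm{Act}(s)$, inducing a Markov chain with transitions $P(s,\sigma(s),\cdot)$; $\Pr^\sigma_s(\Diamond T)$ is the probability of visiting $T$ from $s$ and $\Pr^{\mathrm{opt}}_s(\Diamond T)=\mathrm{opt}_\sigma\Pr^\sigma_s(\Diamond T)$. $\mathbb{N}_\infty=\mathbb{N}\cup\{\infty\}$ with $\infty+1=\infty$. The complementary distance operator $\tilde D^{\mathrm{opt}}\colon\mathbb{N}_\infty^S\to\mathbb{N}_\infty^S$ is $\tilde D^{\mathrm{opt}}(r)(s)=\infty$ if $s\in T$, and for $s\notin T$: $\tilde D^{\mathrm{opt}}(r)(s)=\mathrm{opt}_{a\in\mathrm{Act}(s)}\big(\min_{s'\in\mathrm{Post}(s,a)}r(s')+[\exists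 u,v\in\mathrm{Post}(s,a)\colon r(u)\neq r(v)]\big)$, where $[\varphi]$ is $1$ if $\varphi$ holds and $0$ otherwise. This operator is monotone, so its least fixed point exists. *)

(* Defs.v *)
From HB Require Import structures.
From mathcomp Require Import all_boot all_order all_algebra.
From mathcomp Require Import boolp classical_sets reals.
Set Implicit Arguments. Unset Strict Implicit. Unset Printing Implicit Defensive.
Import Order.TTheory GRing.Theory Num.Theory.
Local Open Scope ring_scope.
Local Open Scope classical_set_scope.

Section MDP.
Variables (R : realType) (S Act : finType) (P : S -> Act -> S -> R).

Definition enabled (s : S) : {set Act} := [set a | \sum_(s' : S) P s a s' == 1].
Definition Post (s : S) (a : Act) : {set S} := [set s' | 0 < P s a s'].

Definition is_MDP : Prop :=
  [/\ forall s a s', 0 <= P s a s' <= 1,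
      forall s a, \sum_(s' : S) P s a s' = 0 \/ \sum_(s' : S) P s a s' = 1
    & forall s, exists a, a \in enabled s].

(* (memoryless deterministic) strategies sigma : S -> Act with sigma(s) in Act(s) *)
Definition strategy (sigma : S -> Act) : Prop := forall s, sigma s \in enabled s.

Fixpoint reach_within (T : {set S}) (sigma : S -> Act) (n : nat) (s : S) : R :=
  if s \in T then 1 else
  match n with
  | 0 => 0
  | n'.+1 => \sum_(s' : S) P s (sigma s) s' * reach_within T sigma n' s'
  end.

(* Pr^sigma_s(<> T) : probability of the event "eventually T", i.e. the
   measure of the increasing union of the events "T within n steps". *)
Definition Pr_reach (T : {set S}) (sigma : S -> Act) (s : S) : R :=
  sup (range (fun n : nat => reach_within T sigma n s)).

Inductive opt_kind := Omin | Omax.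

Definition Pr_opt (o : opt_kind) (T : {set S}) (s : S) : R :=
  let vals := [set Pr_reach T sigma s | sigma in strategy] in
  match o with Omin => inf vals | Omax => sup vals end.

End MDP.

(* ---------- N_infty = nat + {infinity}; None represents infinity ---------- *)
Definition ninf := option nat.
Definition ninf_le (x y : ninf) : bool :=
  match x, y with
  | _, None => true
  | None, Some _ => false
  | Some m, Some n => (m <= n)%N
  end.
Definition ninf_min (x y : ninf) : ninf := if ninf_le x y then x else y.
Definition ninf_max (x y : ninf) : ninf := if ninf_le x y then y else x.
Definition ninf_addb (x : ninf) (b : bool) : ninf :=
  if b then omap succn x else x.

Section Operator.
Variables (R : realType) (S Act : finType) (P : S -> Act -> S -> R).

(* complementary distance operator \tilde D^opt.  Big min uses the top element
   (infinity) as unit and big max the bottom element 0 as unit; the ranges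
   Post(s,a) and Act(s) are nonempty in an MDP. *)
Definition Dtilde (o : opt_kind) (T : {set S}) (r : S -> ninf) (s : S) : ninf :=
  if s \in T then None else
  let val a :=
    ninf_addb (\big[ninf_min/None]_(s' in Post P s a) r s')
              [exists u in Post P s a, exists v in Post P s a, r u != r v] in
  match o with
  | Omin => \big[ninf_min/None]_(a in enabled P s) val a
  | Omax => \big[ninf_max/Some 0%N]_(a in enabled P s) val a
  end.

Definition is_lfp (F : (S -> ninf) -> (S -> ninf)) (r : S -> ninf) : Prop :=
  (forall s, F r s = r s) /\
  (forall r', (forall s, F r' s = r' s) -> forall s, ninf_le (r s) (r' s)).

End Operator.

(* Main.v *)
Require Import Defs.
From HB Require Import structures.
From mathcomp Require Import all_boot all_order all_algebra.
From mathcomp Require Import boolp classical_sets reals.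
From mathcomp Require Import ring lra.
Set Implicit Arguments. Unset Strict Implicit. Unset Printing Implicit Defensive.
Import Order.TTheory GRing.Theory Num.Theory.
Local Open Scope ring_scope.

Lemma nle_refl x : ninf_le x x.
Proof. by case: x => //= n. Qed.
Lemma nle_trans x y z : ninf_le x y -> ninf_le y z -> ninf_le x z.
Proof. by case: x y z => [a|] [b|] [c|] //=; apply: leq_trans. Qed.
Lemma nle_anti x y : ninf_le x y -> ninf_le y x -> x = y.
Proof. by case: x y => [a|] [b|] //= h1 h2; congr Some; apply/eqP; rewrite eqn_leq h1 h2. Qed.
Lemma nle_None x : ninf_le x None.
Proof. by case: x. Qed.
Lemma nle_Nonel y : ninf_le None y -> y = None.
Proof. by case: y. Qed.
Lemma nle_total x y : ninf_le x y || ninf_le y x.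
Proof. by case: x y => [a|] [b|] //=; apply: leq_total. Qed.
Lemma nle_0 x : ninf_le (Some 0%N) x.
Proof. by case: x. Qed.

Lemma nmin_l x y : ninf_le (ninf_min x y) x.
Proof. rewrite /ninf_min; case: ifP => h; first exact: nle_refl.
by move: (nle_total x y); rewrite h. Qed.
Lemma nmin_r x y : ninf_le (ninf_min x y) y.
Proof. rewrite /ninf_min; case: ifP => h //; exact: nle_refl. Qed.
Lemma nmin_glb x y z : ninf_le z x -> ninf_le z y -> ninf_le z (ninf_min x y).
Proof. by rewrite /ninf_min; case: ifP. Qed.
Lemma nmax_l x y : ninf_le x (ninf_max x y).
Proof. rewrite /ninf_max; case: ifP => h //; exact: nle_refl. Qed.
Lemma nmax_r x y : ninf_le y (ninf_max x y).
Proof. rewrite /ninf_max; case: ifP => h; first exact: nle_refl.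
by move: (nle_total x y); rewrite h. Qed.
Lemma nmax_lub x y z : ninf_le x z -> ninf_le y z -> ninf_le (ninf_max x y) z.
Proof. by rewrite /ninf_max; case: ifP. Qed.

Section Big.
Variables (I : finType) (X : pred I).

Lemma bmin_le (f : I -> ninf) a : X a -> ninf_le (\big[ninf_min/None]_(i | X i) f i) (f a).
Proof.
move=> Xa; have : a \in index_enum I by rewrite mem_index_enum.
elim: (index_enum I) => [|b r IH] //; rewrite in_cons big_cons.
case/orP=> [/eqP <-|ar]; first by rewrite Xa; exact: nmin_l.
case: ifP => _; last exact: IH. apply: nle_trans _ (IH ar); exact: nmin_r.
Qed.
Lemma bmin_glb (f : I -> ninf) x : (forall a, X a -> ninf_le x (f a)) ->
  ninf_le x (\big[ninf_min/None]_(i | X i) f i).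
Proof.
move=> h; apply: (big_rec (fun z => ninf_le x z)); first exact: nle_None.
move=> i z Xi hz; apply: nmin_glb => //; exact: h.
Qed.
Lemma bmin_attain (f : I -> ninf) : \big[ninf_min/None]_(i | X i) f i = None \/
  exists2 a, X a & \big[ninf_min/None]_(i | X i) f i = f a.
Proof.
apply: (big_rec (fun z => z = None \/ exists2 a, X a & z = f a)); first by left.
move=> i z Xi hz; rewrite /ninf_min; case: ifP => _; first by right; exists i.
done.
Qed.
Lemma bmin_mono (f g : I -> ninf) : (forall a, X a -> ninf_le (f a) (g a)) ->
  ninf_le (\big[ninf_min/None]_(i | X i) f i) (\big[ninf_min/None]_(i | X i) g i).
Proof.
move=> h; apply: bmin_glb => a Xa; apply: nle_trans _ (h a Xa); exact: bmin_le.
Qed.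
Lemma bmax_ge (f : I -> ninf) a : X a -> ninf_le (f a) (\big[ninf_max/Some 0%N]_(i | X i) f i).
Proof.
move=> Xa; have : a \in index_enum I by rewrite mem_index_enum.
elim: (index_enum I) => [|b r IH] //; rewrite in_cons big_cons.
case/orP=> [/eqP <-|ar]; first by rewrite Xa; exact: nmax_l.
case: ifP => _; last exact: IH. apply: nle_trans (IH ar) _; exact: nmax_r.
Qed.
Lemma bmax_lub (f : I -> ninf) x : (forall a, X a -> ninf_le (f a) x) ->
  ninf_le (\big[ninf_max/Some 0%N]_(i | X i) f i) x.
Proof.
move=> h; apply: (big_rec (fun z => ninf_le z x)); first exact: nle_0.
move=> i z Xi hz; apply: nmax_lub => //; exact: h.
Qed.
Lemma bmax_mono (f g : I -> ninf) : (forall a, X a -> ninf_le (f a) (g a)) ->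
  ninf_le (\big[ninf_max/Some 0%N]_(i | X i) f i) (\big[ninf_max/Some 0%N]_(i | X i) g i).
Proof.
move=> h; apply: bmax_lub => a Xa; apply: nle_trans (h a Xa) _; exact: bmax_ge.
Qed.
Lemma bmin_None (f : I -> ninf) a : X a -> \big[ninf_min/None]_(i | X i) f i = None -> f a = None.
Proof. move=> Xa h; apply: nle_Nonel; rewrite -h; exact: bmin_le. Qed.
End Big.

Section KT.
Variables (S : finType) (F : (S -> ninf) -> (S -> ninf)).
Hypothesis Fmono : forall r1 r2, (forall s, ninf_le (r1 s) (r2 s)) ->
  forall s, ninf_le (F r1 s) (F r2 s).
Definition prefixed (r : S -> ninf) := forall s, ninf_le (F r s) (r s).
Definition Qb s n : bool := `[< exists r, prefixed r /\ r s = Some n >].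
Definition glb s : ninf := match pselect (exists n, Qb s n) with
  | left h => Some (ex_minn h) | right _ => None end.

Lemma glb_lb r s : prefixed r -> ninf_le (glb s) (r s).
Proof.
move=> pr; case E: (r s) => [n|]; last exact: nle_None.
have qn : Qb s n by apply/asboolP; exists r.
rewrite /glb; case: pselect => [h|[]]; last by exists n.
case: ex_minnP => m _ /(_ n qn) //.
Qed.
Lemma glb_glb x s : (forall r, prefixed r -> ninf_le x (r s)) -> ninf_le x (glb s).
Proof.
move=> h; rewrite /glb; case: pselect => [e|_]; last exact: nle_None.
case: ex_minnP => m /asboolP [r [pr <-]] _; exact: h.
Qed.
Lemma glb_fix s : F glb s = glb s.
Proof.
have h1 : prefixed glb.
  move=> s'; apply: glb_glb => r pr; apply: nle_trans (pr s').
  by apply: Fmono => t; apply: glb_lb.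
apply: nle_anti; first exact: h1.
apply: glb_lb => t; apply: Fmono; exact: h1.
Qed.
Lemma lfp_le_prefixed r r' : is_lfp F r -> prefixed r' -> forall s, ninf_le (r s) (r' s).
Proof.
move=> [_ hl] pr s; apply: nle_trans (hl glb glb_fix s) _; exact: glb_lb.
Qed.
End KT.

Section Main.
Variables (R : realType) (S Act : finType) (P : S -> Act -> S -> R).

Definition bminP (r : S -> ninf) s a := \big[ninf_min/None]_(s' in Post P s a) r s'.
Definition ncst (r : S -> ninf) s a :=
  [exists u in Post P s a, exists v in Post P s a, r u != r v].
Definition valr (r : S -> ninf) s a := ninf_addb (bminP r s a) (ncst r s a).

Lemma DtildeE o T r s : Dtilde P o T r s = if s \in T then None else
  match o with
  | Omin => \big[ninf_min/None]_(a in enabled P s) valr r s a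
  | Omax => \big[ninf_max/Some 0%N]_(a in enabled P s) valr r s a
  end.
Proof. by []. Qed.

Lemma bminP_le r s a u : u \in Post P s a -> ninf_le (bminP r s a) (r u).
Proof. exact: (@bmin_le _ (fun i => i \in Post P s a)). Qed.

Lemma valr_mono r1 r2 s a : (forall t, ninf_le (r1 t) (r2 t)) ->
  ninf_le (valr r1 s a) (valr r2 s a).
Proof.
move=> h; rewrite /valr.
have hm : ninf_le (bminP r1 s a) (bminP r2 s a).
  exact: (@bmin_mono _ (fun i => i \in Post P s a)).
case: (@bmin_attain _ (fun i => i \in Post P s a) r2) => [E|[s2 s2P E]].
  by rewrite /bminP E; case: (ncst r2 s a) => /=; apply: nle_None.
rewrite -/(bminP r2 s a) in E.
move: hm; rewrite E; case E2: (r2 s2) => [y|]; last first.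
  by move=> _; case: (ncst r2 s a); apply: nle_None.
case E1: (bminP r1 s a) => [x|] //= xy.
case b1: (ncst r1 s a); case b2: (ncst r2 s a) => //=.
- move: xy; rewrite leq_eqVlt => /orP [/eqP exy|//].
  exfalso; move/existsP: b1 => [u /andP [uP /existsP [v /andP [vP]]]].
  have ru : r1 u = Some x.
    apply: nle_anti; last by rewrite -E1; exact: bminP_le.
    apply: nle_trans (h u) _.
    have : ~~ ncst r2 s a by rewrite b2.
    move/existsPn/(_ u); rewrite uP /= => /existsPn/(_ s2); rewrite s2P /= negbK => /eqP ->.
    by rewrite E2 /= exy.
  have rv : r1 v = Some x.
    apply: nle_anti; last by rewrite -E1; exact: bminP_le.
    apply: nle_trans (h v) _.
    have : ~~ ncst r2 s a by rewrite b2.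
    move/existsPn/(_ v); rewrite vP /= => /existsPn/(_ s2); rewrite s2P /= negbK => /eqP ->.
    by rewrite E2 /= exy.
  by rewrite ru rv eqxx.
- by rewrite (leq_trans xy).
Qed.

Lemma Dtilde_mono o T r1 r2 : (forall s, ninf_le (r1 s) (r2 s)) ->
  forall s, ninf_le (Dtilde P o T r1 s) (Dtilde P o T r2 s).
Proof.
move=> h s; rewrite !DtildeE; case: (s \in T) => //.
case: o.
  by apply: (@bmin_mono _ (fun i => i \in enabled P s)) => a _; apply: valr_mono.
by apply: (@bmax_mono _ (fun i => i \in enabled P s)) => a _; apply: valr_mono.
Qed.
End Main.

Section Prob.
Variables (R : realType) (S Act : finType) (P : S -> Act -> S -> R).
Hypothesis hM : is_MDP P.
Variable T : {set S}.

Lemma P_ge0 s a s' : 0 <= P s a s'.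
Proof. by case: hM => h _ _; case/andP: (h s a s'). Qed.
Lemma P_le1 s a s' : P s a s' <= 1.
Proof. by case: hM => h _ _; case/andP: (h s a s'). Qed.
Lemma sumP1 s a : a \in enabled P s -> \sum_(s' : S) P s a s' = 1.
Proof. by rewrite inE => /eqP. Qed.
Lemma notPost0 s a s' : s' \notin Post P s a -> P s a s' = 0.
Proof. by rewrite inE -leNgt => h; apply/eqP; rewrite eq_le h P_ge0. Qed.
Lemma Post_nonempty s a : a \in enabled P s -> exists s', s' \in Post P s a.
Proof.
move=> ha; apply/not_existsP => hn.
have : \sum_(s' : S) P s a s' = 0.
  by apply: big1 => s' _; apply: notPost0; apply/negP => h; apply: (hn s').
by rewrite sumP1 // => /eqP; rewrite oner_eq0.
Qed.

Variable sigma : S -> Act.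
Hypothesis hs : strategy P sigma.
Notation reach := (reach_within P T sigma).

Lemma reach_in n s : s \in T -> reach n s = 1.
Proof. by case: n => [|n] /= ->. Qed.
Lemma reach_S n s : s \notin T ->
  reach n.+1 s = \sum_(s' : S) P s (sigma s) s' * reach n s'.
Proof. by move=> /negbTE /= ->. Qed.

Lemma reach01 n s : 0 <= reach n s <= 1.
Proof.
elim: n s => [|n IH] s.
  by rewrite /=; case: (s \in T); rewrite ?ler01 ?lexx.
case sT: (s \in T); first by rewrite reach_in // ler01 lexx.
rewrite reach_S ?sT //; apply/andP; split.
  by apply: sumr_ge0 => s' _; apply: mulr_ge0; [exact: P_ge0|case/andP: (IH s')].
rewrite -(sumP1 (hs s)); apply: ler_sum => s' _.
rewrite -{2}(mulr1 (P s (sigma s) s')); apply: ler_wpM2l; first exact: P_ge0.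
by case/andP: (IH s').
Qed.
Lemma reach_ge0 n s : 0 <= reach n s. Proof. by case/andP: (reach01 n s). Qed.
Lemma reach_le1 n s : reach n s <= 1. Proof. by case/andP: (reach01 n s). Qed.

Lemma reach_monoS n s : reach n s <= reach n.+1 s.
Proof.
elim: n s => [|n IH] s.
  case sT: (s \in T); first by rewrite !reach_in.
  have -> : reach 0 s = 0 by rewrite /= sT.
  rewrite reach_S ?sT //; apply: sumr_ge0 => s' _; apply: mulr_ge0; [exact: P_ge0|exact: reach_ge0].
case sT: (s \in T); first by rewrite !reach_in.
rewrite !reach_S ?sT //; apply: ler_sum => s' _; apply: ler_wpM2l; first exact: P_ge0.
exact: IH.
Qed.
Lemma reach_mono n m s : (n <= m)%N -> reach n s <= reach m s.
Proof.
move=> /subnK <-; elim: (m - n)%N => [|k IH] //.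
by apply: le_trans IH _; rewrite addSn; apply: reach_monoS.
Qed.

Lemma Pr_ub s : has_ubound (range (fun n => reach n s)).
Proof. by exists 1 => y [n _ <-]; apply: reach_le1. Qed.
Lemma reach_le_Pr n s : reach n s <= Pr_reach P T sigma s.
Proof. by apply: ub_le_sup; [exact: Pr_ub| exists n]. Qed.
Lemma Pr_le c s : (forall n, reach n s <= c) -> Pr_reach P T sigma s <= c.
Proof. by move=> h; apply: ge_sup; [exists (reach 0 s); exists 0%N| move=> y [n _ <-]]. Qed.
Lemma Pr_le1 s : Pr_reach P T sigma s <= 1.
Proof. by apply: Pr_le => n; apply: reach_le1. Qed.
Lemma Pr_ge0 s : 0 <= Pr_reach P T sigma s.
Proof. by apply: le_trans (reach_le_Pr 0 s); apply: reach_ge0. Qed.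
End Prob.

Section Bound.
Variables (R : realType) (S Act : finType) (P : S -> Act -> S -> R).
Hypothesis hM : is_MDP P.
Variable T : {set S}.

Definition qP := \prod_(x : (S * Act * S)%type | 0 < P x.1.1 x.1.2 x.2) P x.1.1 x.1.2 x.2.
Lemma qP_gt0 : 0 < qP.
Proof. by apply: prodr_gt0 => x. Qed.
Lemma qP_ge0 : 0 <= qP. Proof. exact: ltW qP_gt0. Qed.
Lemma qP_le1 : qP <= 1.
Proof. by apply: prodr_ile1 => x _; rewrite P_ge0 ?P_le1. Qed.
Lemma qP_le s a s' : 0 < P s a s' -> qP <= P s a s'.
Proof.
move=> h; rewrite /qP (bigD1 (s, a, s')) //=.
rewrite -[leRHS]mulr1; apply: ler_wpM2l; first exact: P_ge0.
by apply: prodr_ile1 => x _; rewrite P_ge0 ?P_le1.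
Qed.

Variable sigma : S -> Act.
Hypothesis hs : strategy P sigma.
Notation reach := (reach_within P T sigma).
Variable r : S -> ninf.
Hypothesis hT : forall s, s \in T -> r s = None.
Hypothesis hval : forall s, s \notin T -> ninf_le (valr P r s (sigma s)) (r s).

Lemma reach_bound n s k : r s = Some k -> reach n s <= 1 - qP ^+ k.
Proof.
elim: n s k => [|n IH] s k rs.
  have sT : s \notin T by apply/negP => /hT; rewrite rs.
  by rewrite /= (negbTE sT) subr_ge0; apply: exprn_ile1; [exact: qP_ge0|exact: qP_le1].
have sT : s \notin T by apply/negP => /hT; rewrite rs.
rewrite reach_S //; have hv := hval sT; rewrite rs in hv.
set a := sigma s in hv *.
case: (@bmin_attain _ (fun i => i \in Post P s a) r) => [E|[s1 s1P E]].
  by move: hv; rewrite /valr /bminP E; case: ncst.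
rewrite -/(bminP P r s a) in E.
case rs1: (r s1) => [j|]; last by move: hv; rewrite /valr E rs1; case: ncst.
have h5 : forall j', (j' <= k)%N -> qP ^+ k <= qP ^+ j'.
  by move=> j' hj; apply: ler_wiXn2l => //; [exact: qP_ge0|exact: qP_le1].
case b: (ncst P r s a); move: hv; rewrite /valr E rs1 b /= => hv.
- rewrite (bigD1 s1) //=.
  have h1 : P s a s1 * reach n s1 <= P s a s1 - P s a s1 * qP ^+ j.
    by rewrite -[X in X - _]mulr1 -mulrBr; apply: ler_wpM2l; [exact: P_ge0|exact: IH].
  have h2 : \sum_(i | i != s1) P s a i * reach n i <= \sum_(i | i != s1) P s a i.
    apply: ler_sum => i _; rewrite -[leRHS]mulr1; apply: ler_wpM2l; first exact: P_ge0.
    exact: reach_le1.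
  have h3 : \sum_(i | i != s1) P s a i = 1 - P s a s1.
    by rewrite -(sumP1 (hs s)) [in RHS](bigD1 s1) //= -/a addrAC subrr add0r.
  have h4 : qP * qP ^+ j <= P s a s1 * qP ^+ j.
    by apply: ler_wpM2r; [apply: exprn_ge0; exact: qP_ge0| apply: qP_le; rewrite inE in s1P].
  have h6 : qP ^+ k <= qP * qP ^+ j by rewrite -exprS; apply: h5; exact: hv.
  rewrite h3 in h2; lra.
- idtac.
  rewrite -[leRHS]mul1r -{1}(sumP1 (hs s)) mulr_suml; apply: ler_sum => s' _.
  case s'P: (s' \in Post P s a); last by rewrite notPost0 ?s'P // !mul0r.
  apply: ler_wpM2l; first exact: P_ge0.
  have rs' : r s' = Some j.
    have : ~~ ncst P r s a by rewrite b.
    move/existsPn/(_ s'); rewrite s'P /= => /existsPn/(_ s1); rewrite s1P /= negbK => /eqP ->.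
    done.
  apply: le_trans (IH _ _ rs') _; have := h5 j hv; lra.
Qed.
End Bound.

Lemma bernoulli (R : realType) (d : R) k : 0 <= d -> d <= 1 ->
  (1 - d) ^+ k * (1 + k%:R * d) <= 1.
Proof.
move=> d0 d1; elim: k => [|k IH]; first by rewrite expr0 mul0r addr0 mulr1.
have x0 : 0 <= (1 - d) ^+ k by apply: exprn_ge0; lra.
have h : (1 - d) * (1 + k.+1%:R * d) <= 1 + k%:R * d.
  have k0 : 0 <= k%:R :> R by exact: ler0n.
  rewrite -addn1 natrD; nra.
rewrite exprSr -mulrA; apply: le_trans IH; exact: ler_wpM2l.
Qed.

Lemma geom_small (R : realType) (c d : R) : 0 < c -> 0 < d -> d <= 1 ->
  (forall k, c <= (1 - d) ^+ k) -> False.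
Proof.
move=> c0 d0 d1 h.
have hk : forall k, c * (k%:R * d) <= 1.
  move=> k; have := bernoulli k (ltW d0) d1.
  have := h k; have : 0 <= k%:R * d by apply: mulr_ge0; [exact: ler0n| exact: ltW].
  move=> p1 p2 p3; nra.
have x0 : 0 <= (c * d)^-1 by rewrite invr_ge0; apply: mulr_ge0; apply: ltW.
have := archi_boundP x0; set m := Num.bound _ => hm.
have := hk m; rewrite mulrCA.
have cd0 : 0 < c * d by apply: mulr_gt0.
move=> hh; have : m%:R * (c * d) > 1.
  by rewrite -ltr_pdivrMr // div1r.
lra.
Qed.

Section Decay.
Variables (R : realType) (S Act : finType) (P : S -> Act -> S -> R).
Hypothesis hM : is_MDP P.
Variable T : {set S}.
Variable sigma : S -> Act.
Hypothesis hs : strategy P sigma.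
Notation reach := (reach_within P T sigma).
Variable A : {set S}.
Variable rho : S -> nat.
Hypothesis hA : forall s, s \in A -> s \notin T ->
  (forall s', s' \in Post P s (sigma s) -> s' \in A) /\
  exists2 s', s' \in Post P s (sigma s) & (rho s' < rho s)%N.

Lemma decay_step n b : 0 <= b -> (forall s, s \in A -> 1 - reach n s <= b) ->
  forall j s, s \in A -> (rho s <= j)%N -> 1 - reach (n + j) s <= (1 - qP P ^+ j) * b.
Proof.
move=> b0 hb; elim=> [|j IH] s sA hr.
  case sT: (s \in T); first by rewrite reach_in // expr0; lra.
  have [_ [s' _]] := hA sA (negbT sT); by rewrite ltnNge (leq_trans hr).
case sT: (s \in T).
  rewrite reach_in // subrr; apply: mulr_ge0 => //; rewrite subr_ge0.
  apply: exprn_ile1; [exact: qP_ge0|exact: qP_le1].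
have [hc [s1 s1P hr1]] := hA sA (negbT sT).
have s1A := hc _ s1P.
rewrite addnS reach_S ?sT //.
set a := sigma s in hc s1P *.
have e1 : 1 - \sum_s' P s a s' * reach (n + j) s' = \sum_s' P s a s' * (1 - reach (n + j) s').
  rewrite -{1}(sumP1 (hs s)) -sumrB; apply: eq_bigr => i _; ring.
rewrite e1 (bigD1 s1) //=.
have h1 : P s a s1 * (1 - reach (n + j) s1) <= P s a s1 * ((1 - qP P ^+ j) * b).
  apply: ler_wpM2l; first exact: P_ge0.
  by apply: IH => //; rewrite -ltnS (leq_trans hr1).
have h2 : \sum_(i | i != s1) P s a i * (1 - reach (n + j) i) <= \sum_(i | i != s1) P s a i * b.
  apply: ler_sum => i _.
  case iP: (i \in Post P s a); last by rewrite notPost0 ?iP // !mul0r.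
  apply: ler_wpM2l; first exact: P_ge0.
  apply: le_trans (hb _ (hc _ iP)); rewrite lerD2l lerN2.
  by apply: (reach_mono hM T hs); apply: leq_addr.
have h3 : \sum_(i | i != s1) P s a i * b = (1 - P s a s1) * b.
  by rewrite -big_distrl /= -(sumP1 (hs s)) [in RHS](bigD1 s1) //= -/a addrAC subrr add0r.
have h4 : qP P <= P s a s1 by apply: qP_le; rewrite inE in s1P.
have h5 : 0 <= qP P ^+ j * b by apply: mulr_ge0 => //; apply: exprn_ge0; exact: qP_ge0.
rewrite h3 in h2.
have e2 : (1 - qP P ^+ j.+1) * b = b - qP P * (qP P ^+ j * b) by rewrite exprS; ring.
have e3 : P s a s1 * ((1 - qP P ^+ j) * b) = P s a s1 * b - P s a s1 * (qP P ^+ j * b) by ring.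
have h6 : qP P * (qP P ^+ j * b) <= P s a s1 * (qP P ^+ j * b) by apply: ler_wpM2r.
rewrite e2; rewrite e3 in h1.
have e4 : (1 - P s a s1) * b = b - P s a s1 * b by ring.
rewrite e4 in h2; lra.
Qed.

Variable N : nat.
Hypothesis hN : forall s, s \in A -> (rho s <= N)%N.

Lemma decay k s : s \in A -> 1 - reach (k * N) s <= (1 - qP P ^+ N) ^+ k.
Proof.
have d0 : 0 <= 1 - qP P ^+ N.
  by rewrite subr_ge0; apply: exprn_ile1; [exact: qP_ge0|exact: qP_le1].
elim: k s => [|k IH] s sA.
  by rewrite mul0n expr0 lerBlDr lerDl; apply: reach_ge0.
rewrite mulSn addnC exprS; apply: decay_step => //; first exact: exprn_ge0.
exact: hN.
Qed.

Lemma Pr_one s : s \in A -> Pr_reach P T sigma s = 1.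
Proof.
move=> sA; apply/eqP; rewrite eq_le Pr_le1 //=; rewrite leNgt; apply/negP => hlt.
apply: (@geom_small _ (1 - Pr_reach P T sigma s) (qP P ^+ N)).
- by rewrite subr_gt0.
- by apply: exprn_gt0; exact: qP_gt0.
- by apply: exprn_ile1; [exact: qP_ge0|exact: qP_le1].
move=> k; apply: le_trans (decay k sA); rewrite lerD2l lerN2; exact: reach_le_Pr.
Qed.
End Decay.

Section Main2.
Variables (R : realType) (S Act : finType) (P : S -> Act -> S -> R).
Hypothesis hM : is_MDP P.
Variables (T : {set S}) (o : opt_kind) (r : S -> ninf).
Hypothesis hl : is_lfp (Dtilde P o T) r.
Variable a0 : Act.

Lemma rfix s : Dtilde P o T r s = r s.
Proof. by case: hl => h _; apply: h. Qed.
Lemma rT s : s \in T -> r s = None.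
Proof. by move=> sT; rewrite -rfix DtildeE sT. Qed.
Lemma enabled_ex s : exists a, a \in enabled P s.
Proof. by case: hM => _ _ h; apply: h. Qed.

Definition sdef s := odflt a0 [pick a in enabled P s].
Lemma sdef_strat : strategy P sdef.
Proof.
move=> s; rewrite /sdef; case: pickP => [a //|h].
by case: (enabled_ex s) => a ha; rewrite h in ha.
Qed.

Definition goodmin s a := (a \in enabled P s) && ninf_le (valr P r s a) (r s).
Definition smin s := odflt a0 [pick a | goodmin s a].
Lemma goodmin_ex s : o = Omin -> exists a, goodmin s a.
Proof.
move=> ho; case sT: (s \in T).
  by case: (enabled_ex s) => a ha; exists a; rewrite /goodmin ha rT // nle_None.
have := rfix s; rewrite DtildeE sT ho => E.
case: (@bmin_attain _ (fun a => a \in enabled P s) (valr P r s)) => [E1|[a ha E1]].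
  by case: (enabled_ex s) => a ha; exists a; rewrite /goodmin ha -E E1 nle_None.
by exists a; rewrite /goodmin ha -E E1 nle_refl.
Qed.
Lemma smin_good s : o = Omin -> goodmin s (smin s).
Proof.
move=> ho; rewrite /smin; case: pickP => [a //|h].
by case: (goodmin_ex s ho) => a ha; rewrite h in ha.
Qed.

Lemma Pr_opt_max_le c s : (forall sigma, strategy P sigma -> Pr_reach P T sigma s <= c) ->
  sup [set Pr_reach P T sigma s | sigma in strategy P] <= c.
Proof.
move=> h; apply: ge_sup; first by exists (Pr_reach P T sdef s); exists sdef => //; exact: sdef_strat.
by move=> y [sg hsg <-]; apply: h.
Qed.
Lemma Pr_opt_min_le sigma s : strategy P sigma ->
  inf [set Pr_reach P T sigma s | sigma in strategy P] <= Pr_reach P T sigma s.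
Proof.
move=> hs; apply: ge_inf; last by exists sigma.
by exists 0 => y [sg hsg <-]; apply: (Pr_ge0 hM T hsg).
Qed.

Lemma fin_lt1 s k : r s = Some k -> Pr_opt P o T s < 1.
Proof.
move=> rs.
have hq : 1 - qP P ^+ k < 1 by rewrite ltrBlDr ltrDl; apply: exprn_gt0; apply: qP_gt0.
apply: le_lt_trans hq.
have key : forall sigma, strategy P sigma ->
    (forall t, t \notin T -> ninf_le (valr P r t (sigma t)) (r t)) ->
    Pr_reach P T sigma s <= 1 - qP P ^+ k.
  move=> sg hsg hv; apply: Pr_le => n.
  by apply: (reach_bound hM hsg rT hv).
rewrite /Pr_opt; case ho: o => /=.
- have hst : strategy P smin by move=> t; case/andP: (smin_good t ho).
  apply: le_trans (Pr_opt_min_le s hst) _.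
  apply: key => // t _; by case/andP: (smin_good t ho).
- apply: Pr_opt_max_le => sg hsg; apply: key => // t tT.
  rewrite -rfix DtildeE (negbTE tT) ho.
  exact: (@bmax_ge _ (fun a => a \in enabled P t) (valr P r t)).
Qed.

Definition Aset := [set s | r s == None].
Lemma AsetP s : (s \in Aset) = (r s == None). Proof. by rewrite inE. Qed.

Section Attr.
Variable allowed : S -> Act -> bool.
Fixpoint G (i : nat) : {set S} := if i is i'.+1 then
  G i' :|: [set s | (s \in Aset) && [exists a, allowed s a &&
     [exists s', (s' \in Post P s a) && (s' \in G i')]]] else T.
Definition Att s := exists i, s \in G i.
Definition rho s := match pselect (Att s) with
  | left h => @ex_minn (fun i => s \in G i) h | right _ => 0%N end.

Lemma rho_in s : Att s -> s \in G (rho s) /\ forall i, s \in G i -> (rho s <= i)%N.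
Proof.
move=> h; rewrite /rho; case: pselect => [h'|//].
by case: ex_minnP => m hm hmin; split.
Qed.
Lemma T_att s : s \in T -> Att s. Proof. by move=> sT; exists 0%N. Qed.
Lemma att_of s a s' i : s \in Aset -> allowed s a -> s' \in Post P s a -> s' \in G i -> Att s.
Proof.
move=> sA ha s'P s'G; exists i.+1; rewrite /= inE; apply/orP; right.
rewrite inE sA /=; apply/existsP; exists a; rewrite ha /=.
by apply/existsP; exists s'; rewrite s'P.
Qed.
Lemma att_step s : Att s -> s \notin T ->
  exists a, allowed s a /\ exists s', [/\ s' \in Post P s a, Att s' & (rho s' < rho s)%N].
Proof.
move=> hs sT; have [h1 h2] := rho_in hs; move: h1 h2.
case E: (rho s) => [|m] /=; first by move=> h; rewrite h in sT.
rewrite inE => /orP [h hmin|].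
  by have := hmin _ h; rewrite ltnn.
rewrite inE => /andP [_ /existsP [a /andP [ha /existsP [s' /andP [s'P s'G]]]]] _.
exists a; split => //; exists s'; split => //; first by exists m.
by have [_ ] := rho_in (ex_intro _ m s'G); move/(_ m s'G).
Qed.

Definition Zb t := (t \in Aset) && ~~ `[< Att t >].
Definition Mb := (\max_(t : S) (if r t is Some n then n else 0%N)).+1.
Definition r' t := if Zb t then Some Mb else r t.

Lemma r'_le t : ninf_le (r' t) (r t).
Proof.
rewrite /r'; case Z: (Zb t); last exact: nle_refl.
by move: Z; rewrite /Zb AsetP => /andP [/eqP -> _].
Qed.
Lemma valr_fin t a s' : s' \in Post P t a -> s' \notin Aset -> ninf_le (valr P r' t a) (Some Mb).
Proof.
move=> s'P s'A; move: (s'A); rewrite AsetP; case rs: (r s') => [n|] // _.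
have r's : r' s' = Some n by rewrite /r' /Zb (negbTE s'A).
have nM : (n < Mb)%N.
  rewrite ltnS; have := @leq_bigmax _ (fun t => if r t is Some n then n else 0%N) s'.
  by rewrite rs.
have := bminP_le r' s'P; rewrite r's /valr.
case: (bminP P r' t a) => [m|] //= mn.
have hm := leq_ltn_trans mn nM.
by case: (ncst P r' t a) => /=; rewrite ?addn0 // ltnW.
Qed.
Lemma valr_Z t a : a \in enabled P t -> (forall s', s' \in Post P t a -> Zb s') ->
  valr P r' t a = Some Mb.
Proof.
move=> ha hz; have [s1 s1P] := Post_nonempty hM ha.
have r'Z : forall s', s' \in Post P t a -> r' s' = Some Mb by move=> s' /hz; rewrite /r' => ->.
have hb : bminP P r' t a = Some Mb.
  apply: nle_anti; first by rewrite -(r'Z s1 s1P); apply: bminP_le.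
  apply: (@bmin_glb _ (fun i => i \in Post P t a)) => s' s'P; rewrite r'Z //; exact: nle_refl.
have hc : ncst P r' t a = false.
  case hc: (ncst P r' t a) => //.
  move: hc => /existsP [u /andP [uP /existsP [v /andP [vP]]]].
  by rewrite (r'Z u uP) (r'Z v vP) eqxx.
by rewrite /valr hb hc.
Qed.
Lemma noZ : (forall z, Zb z -> ninf_le (Dtilde P o T r' z) (Some Mb)) ->
  forall s, s \in Aset -> Att s.
Proof.
move=> hz s sA.
have pre : prefixed (Dtilde P o T) r'.
  move=> t; case Z: (Zb t).
    by have := hz t Z; rewrite /r' Z.
  rewrite {2}/r' Z -rfix; apply: Dtilde_mono; exact: r'_le.
have := lfp_le_prefixed (@Dtilde_mono _ _ _ P o T) hl pre s.
case: (pselect (Att s)) => // hn.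
have Z : Zb s by rewrite /Zb sA /=; apply/negP => /asboolP.
by rewrite /r' Z; move: sA; rewrite AsetP => /eqP ->.
Qed.
End Attr.

Lemma Zb_notT al z : Zb al z -> z \notin T.
Proof. by move=> /andP [_ /negP h]; apply/negP => zT; apply: h; apply/asboolP; apply: T_att. Qed.
Lemma Zb_succ al z a s' i : Zb al z -> al z a -> s' \in Post P z a -> s' \in G al i -> False.
Proof.
move=> /andP [zA /negP h] ha s'P s'G; apply: h; apply/asboolP; exact: att_of s'P s'G.
Qed.

Definition allowed_max s a := (a \in enabled P s) && [forall s', (s' \in Post P s a) ==> (s' \in Aset)].

Lemma max_att : o = Omax -> forall s, s \in Aset -> Att allowed_max s.
Proof.
move=> ho; apply: noZ => z Z; rewrite DtildeE (negbTE (Zb_notT Z)) ho.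
apply: (@bmax_lub _ (fun a => a \in enabled P z)) => a ha.
case: (boolP [exists s', (s' \in Post P z a) && (s' \notin Aset)]).
  by move/existsP => [s' /andP [s'P s'A]]; apply: valr_fin s'P s'A.
move/existsPn => hall.
have hal : allowed_max z a.
  rewrite /allowed_max ha /=; apply/forallP => s'; apply/implyP => s'P.
  by have := hall s'; rewrite s'P /= negbK.
rewrite valr_Z //; first exact: nle_refl.
move=> s' s'P; rewrite /Zb.
have := hall s'; rewrite s'P /= negbK => -> /=.
apply/negP => /asboolP [i hi]; exact: Zb_succ Z hal s'P hi.
Qed.

Definition smax s := odflt (sdef s) [pick a | allowed_max s a &&
  [exists s', (s' \in Post P s a) && (rho allowed_max s' < rho allowed_max s)%N]].
Lemma smax_strat : strategy P smax.
Proof.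
move=> s; rewrite /smax; case: pickP => [a /andP [/andP [ha _] _]//|_].
exact: sdef_strat.
Qed.
Lemma max_one : o = Omax -> forall s, s \in Aset -> Pr_reach P T smax s = 1.
Proof.
move=> ho s0 sA0.
have hA : forall s, s \in Aset -> s \notin T ->
  (forall s', s' \in Post P s (smax s) -> s' \in Aset) /\
  (exists2 s', s' \in Post P s (smax s) & (rho allowed_max s' < rho allowed_max s)%N).
  move=> s sA sT; have [a [ha [s' [s'P _ lt]]]] := att_step (max_att ho sA) sT.
  rewrite /smax; case: pickP => [b /andP [/andP [_ hb] /existsP [s'' /andP [s''P lt']]] | h].
    split; last by exists s''.
    by move=> t tP; move/forallP/(_ t): hb; rewrite tP.
  by move: (h a); rewrite ha /=; move/negbT/existsPn/(_ s'); rewrite s'P lt.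
have hN : forall s, s \in Aset -> (rho allowed_max s <= \max_(t : S) rho allowed_max t)%N.
  by move=> s _; apply: (@leq_bigmax _ (rho allowed_max) s).
exact: (@Pr_one _ _ _ P hM T smax smax_strat Aset (rho allowed_max) hA _ hN s0 sA0).
Qed.

Lemma min_closed : o = Omin -> forall s a s', s \in Aset -> s \notin T ->
  a \in enabled P s -> s' \in Post P s a -> s' \in Aset.
Proof.
move=> ho s a s' sA sT ha s'P; move: sA; rewrite !AsetP -rfix DtildeE (negbTE sT) ho => /eqP E.
have := @bmin_None _ (fun a => a \in enabled P s) (valr P r s) a ha E.
rewrite /valr; case E2: (bminP P r s a) => [m|]; first by case: ncst.
move=> _; apply/eqP; exact: (@bmin_None _ (fun i => i \in Post P s a) r s' s'P E2).
Qed.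

Lemma min_one sigma : o = Omin -> strategy P sigma -> forall s, s \in Aset -> Pr_reach P T sigma s = 1.
Proof.
move=> ho hs.
pose al := fun s a => a == sigma s.
have hatt : forall s, s \in Aset -> Att al s.
  apply: noZ => z Z; rewrite DtildeE (negbTE (Zb_notT Z)) ho.
  apply: nle_trans (@bmin_le _ (fun a => a \in enabled P z) (valr P (r' al) z) (sigma z) (hs z)) _.
  rewrite valr_Z //; first exact: nle_refl.
  move=> s' s'P; rewrite /Zb (min_closed ho _ (Zb_notT Z) (hs z) s'P) /=; last by case/andP: Z.
  apply/negP => /asboolP [i hi]; apply: (Zb_succ (al := al) Z _ s'P hi); exact: eqxx.
have hA : forall s, s \in Aset -> s \notin T ->
  (forall s', s' \in Post P s (sigma s) -> s' \in Aset) /\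
  (exists2 s', s' \in Post P s (sigma s) & (rho al s' < rho al s)%N).
  move=> s sA sT; split; first by move=> t tP; apply: (min_closed ho sA sT (hs s)).
  have [a [ha [s' [s'P _ lt]]]] := att_step (hatt s sA) sT.
  by move: ha s'P; rewrite /al => /eqP ->; exists s'.
have hN : forall s, s \in Aset -> (rho al s <= \max_(t : S) rho al t)%N.
  by move=> s _; apply: (@leq_bigmax _ (rho al) s).
move=> s0 sA0.
exact: (@Pr_one _ _ _ P hM T sigma hs Aset (rho al) hA _ hN s0 sA0).
Qed.

Lemma inf_one s : o = Omin -> s \in Aset -> inf [set Pr_reach P T sigma s | sigma in strategy P] = 1.
Proof.
move=> ho sA; apply/eqP; rewrite eq_le; apply/andP; split.
  by rewrite -(min_one ho sdef_strat sA); apply: Pr_opt_min_le; exact: sdef_strat.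
apply: lb_le_inf; first by exists (Pr_reach P T sdef s); exists sdef => //; exact: sdef_strat.
by move=> y [sg hsg <-]; rewrite (min_one ho hsg sA).
Qed.
Lemma sup_one s : o = Omax -> s \in Aset -> sup [set Pr_reach P T sigma s | sigma in strategy P] = 1.
Proof.
move=> ho sA; apply/eqP; rewrite eq_le; apply/andP; split.
  by apply: Pr_opt_max_le => sg hsg; apply: (Pr_le1 hM T hsg).
rewrite -(max_one ho sA); apply: ub_le_sup; last by exists smax => //; exact: smax_strat.
by exists 1 => y [sg hsg <-]; apply: (Pr_le1 hM T hsg).
Qed.

Lemma main_iff s : r s = None <-> Pr_opt P o T s = 1.
Proof.
split.
  move=> rs; have sA : s \in Aset by rewrite AsetP rs.
  by rewrite /Pr_opt; case ho: o => /=; [exact: inf_one | exact: sup_one].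
case rs: (r s) => [k|] // h.
by have := fin_lt1 rs; rewrite h ltxx.
Qed.
End Main2.


Theorem lemma3 (R : realType) (S Act : finType) (P : S -> Act -> S -> R)
    (T : {set S}) (o : opt_kind) (r : S -> ninf) :
  is_MDP P ->
  is_lfp (Dtilde P o T) r ->
  forall s : S, r s = None <-> Pr_opt P o T s = 1.
Proof.
move=> hM hl s.
have [a0 _] : exists a, a \in enabled P s by case: hM => _ _ h; apply: h.
exact: (main_iff hM hl a0 s).
Qed.
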